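(* (1) $\mathcal{K}^{\mathsf{TJ}}(\overline{K_n})=\{k:k\ge2\}$ for $n\ge2$. (2) $\mathcal{K}^{\mathsf{TJ}}(\overline{K_{1,n}})=\{k:k\ge2\}$ for $n\ge1$. (3) $\mathcal{K}^{\mathsf{TJ}}(\overline{K_{m,n}})=\{k:k\ge2\}$ for $2\le m\le n$. (4) $\mathcal{K}^{\mathsf{TJ}}(\overline{B_p})=\{k:k\ge2\}$ for $p\ge1$. (5) $\mathcal{K}^{\mathsf{TJ}}(\overline{P_n})=\{k:k\ge2\}$ for $3\le n\le5$, and $=\varnothing$ for $n\ge6$. (6) $\mathcal{K}^{\mathsf{TJ}}(\overline{C_n})=\{k:k\ge2\}$ for $4\le n\le6$, and $=\varnothing$ for $n\ge7$. (7) $\mathcal{K}^{\mathsf{TJ}}(\overline{F_p})=\{k:k\ge2\}$ for $p\in\{1,2\}$, $\mathcal{K}^{\mathsf{TJ}}(\overline{F_3})=\{2\}$, and $\mathcal{K}^{\mathsf{TJ}}(\overline{F_p})=\varnothing$ for $p\ge4$.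
   Context: All graphs are finite, simple, undirected; $\overline{G}$ denotes the complement of $G$. A $k$-clique of a graph $H$ is a set of $k$ pairwise adjacent vertices. For a graph $H$ and integer $k\ge1$, the Token Jumping graph $\mathsf{TJ}_k(H)$ has as vertices the $k$-cliques of $H$, and two $k$-cliques $A,B$ are adjacent iff $|A\cap B|=k-1$. For a graph $G$, $\mathcal{K}^{\mathsf{TJ}}(G)=\{k\ge1:\ \exists H,\ \mathsf{TJ}_k(H)\cong G\}$. $K_n$, $P_n$, $C_n$ denote the complete graph, path, cycle on $n$ vertices; $K_{m,n}$ the complete bipartite graph. The book graph $B_p$ consists of $p$ triangles sharing a common edge; the friendship graph $F_p$ consists of $p$ triangles sharing a common vertex. *)

(* Defs.v *)
From mathcomp Require Import all_boot.
Set Implicit Arguments. Unset Strict Implicit. Unset Printing Implicit Defensive.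

Definition compl (V : finType) (e : rel V) : rel V :=
  fun x y => (x != y) && ~~ e x y.

Definition is_kclique (V : finType) (e : rel V) (k : nat) (A : {set V}) : bool :=
  (#|A| == k) && [forall x in A, forall y in A, (x != y) ==> e x y].

(* TJ_k(H) is isomorphic to G = (VG, eG), where H = (VH, eH):
   an explicit bijection f from the vertices of G onto the k-cliques of H
   such that x ~ y in G iff |f x ∩ f y| = k - 1. *)
Definition TJ_iso (VH : finType) (eH : rel VH) (k : nat)
    (VG : finType) (eG : rel VG) : Prop :=
  exists f : VG -> {set VH},
    [/\ injective f,
        (forall x, is_kclique eH k (f x)),
        (forall A, is_kclique eH k A -> exists x, f x = A) &
        (forall x y, eG x y = (#|f x :&: f y| == k - 1))].

Definition KTJ (VG : finType) (eG : rel VG) (k : nat) : Prop :=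
  1 <= k /\
  exists (VH : finType) (eH : rel VH),
    [/\ symmetric eH, irreflexive eH & TJ_iso eH k eG].

Definition Kn_adj (n : nat) : rel 'I_n := fun x y => x != y.
Definition Kmn_adj (m n : nat) : rel ('I_m + 'I_n) :=
  fun x y => match x, y with
             | inl _, inr _ | inr _, inl _ => true
             | _, _ => false end.
(* book graph B_p: spine vertices inl false, inl true; page vertices inr i *)
Definition book_adj (p : nat) : rel (bool + 'I_p) :=
  fun x y => match x, y with
             | inl a, inl b => a != b
             | inl _, inr _ | inr _, inl _ => true
             | inr _, inr _ => false end.
Definition path_adj (n : nat) : rel 'I_n :=
  fun x y => (nat_of_ord y == (nat_of_ord x).+1) || (nat_of_ord x == (nat_of_ord y).+1).
Definition cycle_adj (n : nat) : rel 'I_n :=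
  fun x y => (nat_of_ord y == (nat_of_ord x).+1 %% n) ||
             (nat_of_ord x == (nat_of_ord y).+1 %% n).
(* friendship graph F_p: centre None, triangle i has vertices Some (i,false), Some (i,true) *)
Definition friend_adj (p : nat) : rel (option ('I_p * bool)) :=
  fun x y => match x, y with
             | None, Some _ | Some _, None => true
             | Some (i, a), Some (j, b) => (i == j) && (a != b)
             | None, None => false end.

(* Main.v *)
Require Import Defs.
From mathcomp Require Import all_boot.
From mathcomp Require Import zify.
Set Implicit Arguments. Unset Strict Implicit. Unset Printing Implicit Defensive.

Definition T6 := (bool * bool * bool * bool * bool * bool)%type.
Definition bit (i : nat) (t : T6) : bool :=
  match i with
  | 0 => t.1.1.1.1.1 | 1 => t.1.1.1.1.2 | 2 => t.1.1.1.2 | 3 => t.1.1.2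
  | 4 => t.1.2 | _ => t.2 end.
Definition sig6 (V : finType) (F : nat -> {set V}) (v : V) : T6 :=
  (v \in F 0, v \in F 1, v \in F 2, v \in F 3, v \in F 4, v \in F 5).

Lemma bit_sig (V : finType) (F : nat -> {set V}) v i : i < 6 -> bit i (sig6 F v) = (v \in F i).
Proof. by case: i => [|[|[|[|[|[|i]]]]]]. Qed.

Lemma venn_ex (V : finType) (F : nat -> {set V}) :
  exists r : T6 -> nat, forall P : pred T6,
    #|[set v | P (sig6 F v)]| = \sum_(t : T6) (if P t then r t else 0).
Proof.
exists (fun t => #|[set v | sig6 F v == t]|) => P.
rewrite -big_mkcond /= -sum1_card (partition_big (sig6 F) P) /=; last by move=> v; rewrite inE.
apply: eq_bigr => t Pt; rewrite -sum1_card; apply: eq_bigl => v; rewrite !inE.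
by case: eqP => [->|]; rewrite ?Pt ?andbF.
Qed.

Lemma sumprod (X : finType) (G : X * bool -> nat) :
  \sum_(p : X * bool) G p = \sum_(x : X) (G (x,true) + G (x,false)).
Proof.
rewrite (eq_bigr (fun p => G (p.1, p.2))); last by case.
rewrite -(pair_bigA _ (fun x b => G (x, b))) /=; apply: eq_bigr => x _; by rewrite big_bool.
Qed.

Lemma venn_facts (V : finType) (F : nat -> {set V}) :
  exists r : T6 -> nat,
   [/\ (forall i, i < 6 -> #|F i| = \sum_(t : T6) (if bit i t then r t else 0)),
       (forall i j, i < 6 -> j < 6 -> #|F i :&: F j| = \sum_(t : T6) (if bit i t && bit j t then r t else 0)),
       (forall i j l, i < 6 -> j < 6 -> l < 6 -> #|F i :|: F j :|: F l| = \sum_(t : T6) (if [|| bit i t, bit j t | bit l t] then r t else 0)) &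
       (forall i j l, i < 6 -> j < 6 -> l < 6 -> #|F i :&: F j :&: F l| = \sum_(t : T6) (if [&& bit i t, bit j t & bit l t] then r t else 0))].
Proof.
have [r Hr] := venn_ex F; exists r; split.
- move=> i hi; rewrite -Hr; apply: eq_card => v; by rewrite !inE bit_sig.
- move=> i j hi hj; rewrite -Hr; apply: eq_card => v; by rewrite !inE !bit_sig.
- move=> i j l hi hj hl; rewrite -Hr; apply: eq_card => v; by rewrite !inE !bit_sig // orbA.
- move=> i j l hi hj hl; rewrite -Hr; apply: eq_card => v; by rewrite !inE !bit_sig // andbA.
Qed.

Ltac expand_venn H := rewrite !sumprod big_bool /= in H.

Definition p6 (i j : nat) := (i + 2 <= j) || (j + 2 <= i).

Lemma P6_sets (V : finType) (F : nat -> {set V}) k :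
  (forall i, i < 6 -> #|F i| = k) ->
  (forall i j, i < 6 -> j < 6 -> p6 i j -> (#|F i :&: F j|).+1 = k) ->
  (forall i j, i < 6 -> j < 6 -> i != j -> ~~ p6 i j -> (#|F i :&: F j|).+2 <= k) ->
  False.
Proof.
move=> Hs Ha Hn.
have [r [H1 H2 _ _]] := venn_facts F.
have s0 := Hs 0 isT. rewrite H1 // in s0. expand_venn s0.
have s1 := Hs 1 isT. rewrite H1 // in s1. expand_venn s1.
have s2 := Hs 2 isT. rewrite H1 // in s2. expand_venn s2.
have s3 := Hs 3 isT. rewrite H1 // in s3. expand_venn s3.
have s4 := Hs 4 isT. rewrite H1 // in s4. expand_venn s4.
have s5 := Hs 5 isT. rewrite H1 // in s5. expand_venn s5.
have a01 := Hn 0 1 isT isT isT isT. rewrite H2 // in a01. expand_venn a01.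
have a02 := Ha 0 2 isT isT isT. rewrite H2 // in a02. expand_venn a02.
have a03 := Ha 0 3 isT isT isT. rewrite H2 // in a03. expand_venn a03.
have a04 := Ha 0 4 isT isT isT. rewrite H2 // in a04. expand_venn a04.
have a05 := Ha 0 5 isT isT isT. rewrite H2 // in a05. expand_venn a05.
have a12 := Hn 1 2 isT isT isT isT. rewrite H2 // in a12. expand_venn a12.
have a13 := Ha 1 3 isT isT isT. rewrite H2 // in a13. expand_venn a13.
have a14 := Ha 1 4 isT isT isT. rewrite H2 // in a14. expand_venn a14.
have a15 := Ha 1 5 isT isT isT. rewrite H2 // in a15. expand_venn a15.
have a23 := Hn 2 3 isT isT isT isT. rewrite H2 // in a23. expand_venn a23.
have a24 := Ha 2 4 isT isT isT. rewrite H2 // in a24. expand_venn a24.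
have a25 := Ha 2 5 isT isT isT. rewrite H2 // in a25. expand_venn a25.
have a34 := Hn 3 4 isT isT isT isT. rewrite H2 // in a34. expand_venn a34.
have a35 := Ha 3 5 isT isT isT. rewrite H2 // in a35. expand_venn a35.
have a45 := Hn 4 5 isT isT isT isT. rewrite H2 // in a45. expand_venn a45.
clear -s0 s1 s2 s3 s4 s5 a01 a02 a03 a04 a05 a12 a13 a14 a15 a23 a24 a25 a34 a35 a45.
lia.
Qed.

Definition k5 (i j : nat) := (i != j) && ~~ (((i == 2) && (j == 4)) || ((i == 4) && (j == 2))).

Lemma K5e_sets (V : finType) (F : nat -> {set V}) k :
  (forall i, i < 5 -> #|F i| = k) ->
  (forall i j, i < 5 -> j < 5 -> k5 i j -> (#|F i :&: F j|).+1 = k) ->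
  (#|F 2 :&: F 4|).+2 <= k ->
  False.
Proof.
move=> Hs Ha Hn.
have [r [H1 H2 _ _]] := venn_facts F.
have s0 := Hs 0 isT. rewrite H1 // in s0. expand_venn s0.
have s1 := Hs 1 isT. rewrite H1 // in s1. expand_venn s1.
have s2 := Hs 2 isT. rewrite H1 // in s2. expand_venn s2.
have s3 := Hs 3 isT. rewrite H1 // in s3. expand_venn s3.
have s4 := Hs 4 isT. rewrite H1 // in s4. expand_venn s4.
have a01 := Ha 0 1 isT isT isT. rewrite H2 // in a01. expand_venn a01.
have a02 := Ha 0 2 isT isT isT. rewrite H2 // in a02. expand_venn a02.
have a03 := Ha 0 3 isT isT isT. rewrite H2 // in a03. expand_venn a03.
have a04 := Ha 0 4 isT isT isT. rewrite H2 // in a04. expand_venn a04.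
have a12 := Ha 1 2 isT isT isT. rewrite H2 // in a12. expand_venn a12.
have a13 := Ha 1 3 isT isT isT. rewrite H2 // in a13. expand_venn a13.
have a14 := Ha 1 4 isT isT isT. rewrite H2 // in a14. expand_venn a14.
have a23 := Ha 2 3 isT isT isT. rewrite H2 // in a23. expand_venn a23.
have a24 := Hn. rewrite H2 // in a24. expand_venn a24.
have a34 := Ha 3 4 isT isT isT. rewrite H2 // in a34. expand_venn a34.
clear -s0 s1 s2 s3 s4 a01 a02 a03 a04 a12 a13 a14 a23 a24 a34.
lia.
Qed.

Lemma diamond_sets (V : finType) (F : nat -> {set V}) k :
  (forall i, i < 4 -> #|F i| = k) ->
  (#|F 0 :&: F 1|).+1 = k -> (#|F 0 :&: F 2|).+1 = k -> (#|F 1 :&: F 2|).+1 = k ->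
  (#|F 0 :&: F 3|).+1 = k -> (#|F 1 :&: F 3|).+1 = k -> (#|F 2 :&: F 3|).+2 <= k ->
  (#|F 0 :|: F 1 :|: F 2| = k.+1 /\ (#|F 0 :&: F 1 :&: F 2|).+2 = k) \/
  (#|F 0 :|: F 1 :|: F 3| = k.+1 /\ (#|F 0 :&: F 1 :&: F 3|).+2 = k).
Proof.
move=> Hs a01 a02 a12 a03 a13 a23.
have [r [H1 H2 H3 H4]] := venn_facts F.
have s0 := Hs 0 isT. rewrite H1 // in s0. expand_venn s0.
have s1 := Hs 1 isT. rewrite H1 // in s1. expand_venn s1.
have s2 := Hs 2 isT. rewrite H1 // in s2. expand_venn s2.
have s3 := Hs 3 isT. rewrite H1 // in s3. expand_venn s3.
rewrite !H2 // in a01 a02 a12 a03 a13 a23.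
expand_venn a01. expand_venn a02. expand_venn a12. expand_venn a03. expand_venn a13. expand_venn a23.
rewrite !H3 // !H4 //.
rewrite !sumprod !big_bool /=.
clear -s0 s1 s2 s3 a01 a02 a12 a03 a13 a23.
lia.
Qed.

Lemma card_set2I (T : finType) (a b : T) (C : {set T}) : a != b ->
  #|[set a; b] :&: C| = (a \in C) + (b \in C).
Proof.
move=> ab; rewrite (cardsD1 a) (cardsD1 b) !inE !eqxx /= orbT eq_sym (negbTE ab) /=.
set S := (_ :\ b); have -> : S = set0.
  by apply/setP => u; rewrite !inE; case: (u == b); case: (u == a); rewrite /= ?andbF.
by rewrite cards0 addn0.
Qed.

Definition cnt (VG VR : finType) (g1 g2 : VG -> VR) (x y : VG) : nat :=
  ((g1 x == g1 y) || (g1 x == g2 y)) + ((g2 x == g1 y) || (g2 x == g2 y)).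

Lemma card_sumset (X Y : finType) (A : {set X + Y}) :
  #|A| = #|[set i | inl i \in A]| + #|[set a | inr a \in A]|.
Proof.
rewrite -(cardsID [set u : X + Y | if u is inl _ then true else false] A).
have -> : #|A :&: [set u : X + Y | if u is inl _ then true else false]| = #|(@inl X Y) @: [set i | inl i \in A]|.
  apply: eq_card => u; rewrite !inE; case: u => [i|a] /=; rewrite ?andbT ?andbF.
    by rewrite (mem_imset _ _ (@inl_inj _ _)) inE.
  by apply/esym/imsetP => -[i _].
have -> : #|A :\: [set u : X + Y | if u is inl _ then true else false]| = #|(@inr X Y) @: [set a | inr a \in A]|.
  apply: eq_card => u; rewrite !inE; case: u => [i|a] /=; rewrite ?andbT ?andbF.
    by apply/esym/imsetP => -[j _].
  by rewrite (mem_imset _ _ (@inr_inj _ _)) inE.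
by rewrite !card_imset //; [apply: inr_inj | apply: inl_inj].
Qed.

Section Line.
Variables (VG VR : finType) (eG : rel VG) (eR : rel VR) (g1 g2 : VG -> VR) (k : nat).
Hypotheses (symR : symmetric eR) (irrR : irreflexive eR) (k2 : 2 <= k)
  (tri : k = 2 \/ forall a b c, eR a b -> eR b c -> eR a c -> False)
  (gE : forall x, eR (g1 x) (g2 x))
  (gS : forall a b, eR a b -> exists x, (g1 x = a /\ g2 x = b) \/ (g1 x = b /\ g2 x = a))
  (gI : forall x y, cnt g1 g2 x y = 2 -> x = y)
  (eGE : forall x y, eG x y = (cnt g1 g2 x y == 1)).

Let n := k - 2.
Let VH := ('I_n + VR)%type.
Definition eHl : rel VH := fun u v =>
  match u, v with
  | inl i, inl j => i != j
  | inr a, inr b => eR a b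
  | _, _ => true end.
Let gs x := [set g1 x; g2 x].
Let f x : {set VH} := [set u | match u with inl _ => true | inr a => a \in gs x end].

Lemma g12 x : g1 x != g2 x.
Proof. by apply/eqP => e; have := gE x; rewrite e irrR. Qed.

Lemma cntE x y : #|gs x :&: gs y| = cnt g1 g2 x y.
Proof. by rewrite card_set2I ?g12 // !inE. Qed.

Lemma cardf x y : #|f x :&: f y| = n + cnt g1 g2 x y.
Proof.
rewrite card_sumset -cntE; congr (_ + _).
  by rewrite -[RHS]card_ord; apply: eq_card => i; rewrite !inE.
by apply: eq_card => a; rewrite !inE.
Qed.

Lemma line_KTJ : KTJ eG k.
Proof.
split; first by lia.
exists VH, eHl; split.
- by case=> [i|a] [j|b] //=; rewrite ?symR // eq_sym.
- by case=> [i|a] //=; rewrite ?irrR ?eqxx.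
exists f; split.
- move=> x y fxy; apply: gI; rewrite -cntE.
  have -> : gs x = gs y by apply/setP => a; move/setP: fxy => /(_ (inr a)); rewrite !inE.
  by rewrite setIid cards2 g12.
- move=> x; apply/andP; split.
    have := cardf x x; rewrite setIid => ->; rewrite -cntE setIid cards2 g12 /n.
    by apply/eqP; lia.
  apply/forallP => u; apply/implyP => hu; apply/forallP => v; apply/implyP => hv.
  apply/implyP; move: hu hv; rewrite !inE.
  case: u => [i|a]; case: v => [j|b] //= ha hb nab.
  have nab' : a != b by apply: contraNneq nab => ->.
  move: ha hb nab'; rewrite !inE => /orP[]/eqP-> /orP[]/eqP->; rewrite ?eqxx //.
  move=> ?; rewrite symR; exact: (gE x).
- move=> A /andP[cA0 cl0]; have cA := eqP cA0; have cl := forallP cl0.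
  set I := [set i | inl i \in A]; set B := [set a | inr a \in A].
  have cAs : #|I| + #|B| = k by rewrite -cA card_sumset.
  have In : #|I| <= n by rewrite -[X in _ <= X]card_ord max_card.
  have Bcl : forall a b, a \in B -> b \in B -> a != b -> eR a b.
    move=> a b; rewrite !inE => ha hb nab.
    have := cl (inr a); rewrite ha /= => /forallP /(_ (inr b)); rewrite hb /=.
    by move/implyP; apply; apply/eqP => -[] e; rewrite e eqxx in nab.
  have B2 : #|B| = 2.
    case: tri => [k2e|trf]; first by lia.
    have : #|B| <= 2.
      rewrite leqNgt; apply/negP => B3.
      have [a aB] : exists a, a \in B by apply/card_gt0P; lia.
      have [b bB] : exists b, b \in B :\ a by apply/card_gt0P; rewrite (cardsD1 a) aB in B3; lia.
      have [c cB] : exists c, c \in B :\ a :\ b.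
        apply/card_gt0P; rewrite (cardsD1 a B) aB in B3; rewrite (cardsD1 b (B :\ a)) bB in B3; lia.
      move: bB cB; rewrite !in_setD1 => /andP[ba bB] /and3P[cb ca cB].
      apply: (trf a b c); [apply: Bcl aB bB _; by rewrite eq_sym | apply: Bcl bB cB _; by rewrite eq_sym | apply: Bcl aB cB _; by rewrite eq_sym].
    by lia.
  have IT : I = setT.
    apply/eqP; rewrite eqEcard subsetT cardsT card_ord; lia.
  have [a [b [nab Be]]] : exists a b, a != b /\ B = [set a; b] by apply/cards2P; rewrite B2.
  have eab : eR a b by apply: Bcl; rewrite // Be !inE eqxx ?orbT.
  have [x hx] := gS eab.
  exists x; apply/setP => u; rewrite inE; case: u => [i|c].
    by move/setP: IT => /(_ i); rewrite !inE.
  have : (c \in B) = (c \in gs x).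
    rewrite Be /gs; case: hx => -[-> ->] //; by rewrite setUC.
  by rewrite inE.
- move=> x y; rewrite eGE cardf /n; apply/eqP/eqP; lia.
Qed.
End Line.

Section Neg.
Variables (VG VH : finType) (eG : rel VG) (eH : rel VH) (k : nat) (f : VG -> {set VH}).
Hypotheses (k1 : 1 <= k) (finj : injective f) (fcl : forall x, is_kclique eH k (f x))
  (fsur : forall A, is_kclique eH k A -> exists x, f x = A)
  (fadj : forall x y, eG x y = (#|f x :&: f y| == k - 1)).

Lemma cardf1 x : #|f x| = k.
Proof. by have /andP[/eqP -> _] := fcl x. Qed.

Lemma adj_card x y : eG x y -> (#|f x :&: f y|).+1 = k.
Proof. rewrite fadj => /eqP ->; lia. Qed.

Lemma nadj_card x y : x != y -> ~~ eG x y -> (#|f x :&: f y|).+2 <= k.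
Proof.
move=> nxy; rewrite fadj => ne.
have le : #|f x :&: f y| <= k by rewrite -(cardf1 x) subset_leq_card // subsetIl.
have nk : #|f x :&: f y| != k.
  apply/eqP => e.
  have e1 : f x :&: f y = f x by apply/eqP; rewrite eqEcard subsetIl cardf1 e leqnn.
  have sxy : f x \subset f y by rewrite -e1 subsetIr.
  have : f x = f y by apply/eqP; rewrite eqEcard sxy !cardf1 leqnn.
  by move/finj => exy; rewrite exy eqxx in nxy.
move: ne nk; lia.
Qed.

Lemma eG_irr x : eG x x = false.
Proof. by rewrite fadj setIid cardf1; apply/eqP; lia. Qed.

Lemma eG_neq x y : eG x y -> x != y.
Proof. by apply: contraTneq => ->; rewrite eG_irr. Qed.

Lemma noP6 (x : nat -> VG) :
  (forall i j, i < 6 -> j < 6 -> x i = x j -> i = j) ->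
  (forall i j, i < 6 -> j < 6 -> eG (x i) (x j) = (i != j) && p6 i j) -> False.
Proof.
move=> xi xe; apply: (@P6_sets _ (fun i => f (x i)) k).
- by move=> i _; apply: cardf1.
- move=> i j hi hj pij; apply: adj_card; rewrite xe // pij andbT.
  by apply: contraTneq pij => ->; rewrite /p6; lia.
- move=> i j hi hj nij pij; apply: nadj_card.
    by apply: contraNneq nij => /xi ->.
  by rewrite xe // (negbTE pij) andbF.
Qed.

Lemma noK5e (x : nat -> VG) :
  (forall i j, i < 5 -> j < 5 -> x i = x j -> i = j) ->
  (forall i j, i < 5 -> j < 5 -> eG (x i) (x j) = k5 i j) -> False.
Proof.
move=> xi xe; apply: (@K5e_sets _ (fun i => f (x i)) k).
- by move=> i _; apply: cardf1.
- by move=> i j hi hj pij; apply: adj_card; rewrite xe.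
- apply: nadj_card; first by apply/eqP => e; have := xi 2 4 isT isT e.
  by rewrite xe.
Qed.

Lemma miss_eq (T X : {set VH}) p : X \subset T -> #|T| = (#|X|).+1 -> p \in T -> p \notin X ->
  X = T :\ p.
Proof.
move=> XT cT pT pX; apply/eqP; rewrite eqEcard; apply/andP; split.
  apply/subsetP => u uX; rewrite !inE (subsetP XT) // andbT.
  by apply: contraNneq pX => <-.
by rewrite (cardsD1 p T) pT in cT; lia.
Qed.

Lemma cl_of X p q : is_kclique eH k X -> p \in X -> q \in X -> p != q -> eH p q.
Proof.
move=> /andP[_ /forallP cl] pX qX npq.
by have := cl p; rewrite pX /= => /forallP /(_ q); rewrite qX /= npq.
Qed.

Lemma fneq x y : eG x y -> f x != f y.
Proof. move/eG_neq; apply: contraNneq => /finj ->; by rewrite eqxx. Qed.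

Lemma tri_claim x0 x1 zz : 3 <= k -> eG x0 x1 -> eG zz x0 -> eG zz x1 ->
  #|f x0 :|: f x1 :|: f zz| = k.+1 -> (#|f x0 :&: f x1 :&: f zz|).+2 = k ->
  exists w, [/\ eG w x0, eG w x1 & eG w zz].
Proof.
move=> k3 e01 ez0 ez1 cT c3.
set T := f x0 :|: f x1 :|: f zz.
have [t tI] : exists t, t \in f x0 :&: f x1 :&: f zz by apply/card_gt0P; lia.
have sub0 : f x0 \subset T by apply/subsetP => u; rewrite !inE => ->; rewrite ?orbT.
have sub1 : f x1 \subset T by apply/subsetP => u; rewrite !inE => ->; rewrite ?orbT.
have sub2 : f zz \subset T by apply/subsetP => u; rewrite !inE => ->; rewrite ?orbT.
have tT : t \in T by apply: (subsetP sub0); move: tI; rewrite !inE => /andP[/andP[]].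
have key : forall (X : {set VH}) p q, X \subset T -> #|X| = k -> p \in T -> q \in T ->
    (p \in X) && (q \in X) \/ X = T :\ p \/ X = T :\ q.
  move=> X p q XT cX pT qT.
  case pX: (p \in X); case qX: (q \in X) => /=; first by left.
  - by right; right; apply: miss_eq; rewrite ?qX ?cX.
  - by right; left; apply: miss_eq; rewrite ?pX ?cX.
  - by right; left; apply: miss_eq; rewrite ?pX ?cX.
have Tcl : forall p q, p \in T -> q \in T -> p != q -> eH p q.
  move=> p q pT qT npq.
  have n01 := fneq e01; have n20 := fneq ez0; have n21 := fneq ez1.
  case: (key _ p q sub0 (cardf1 x0) pT qT) => [/andP[??]|h0]; first by apply: (cl_of (fcl x0)).
  case: (key _ p q sub1 (cardf1 x1) pT qT) => [/andP[??]|h1]; first by apply: (cl_of (fcl x1)).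
  case: (key _ p q sub2 (cardf1 zz) pT qT) => [/andP[??]|h2]; first by apply: (cl_of (fcl zz)).
  move: n01 n20 n21.
  by case: h0 => ->; case: h1 => ->; case: h2 => ->; rewrite ?eqxx.
have Wcl : is_kclique eH k (T :\ t).
  apply/andP; split.
    by rewrite (cardsD1 t T) tT in cT; apply/eqP; lia.
  apply/forallP => p; apply/implyP => pW; apply/forallP => q; apply/implyP => qW.
  apply/implyP => npq; apply: Tcl => //.
    by move: pW; rewrite inE => /andP[].
  by move: qW; rewrite inE => /andP[].
have [w fw] := fsur Wcl.
have adjw : forall y, f y \subset T -> t \in f y -> eG w y.
  move=> y yT ty; rewrite fadj fw.
  have -> : (T :\ t) :&: f y = f y :\ t.
    apply/setP => u; rewrite !inE; case uy: (u \in f y); rewrite ?andbF ?andbT //=.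
    by have := subsetP yT u; rewrite uy !inE => /(_ isT) ->; rewrite andbT.
  by have := cardsD1 t (f y); rewrite ty cardf1 => h; apply/eqP; lia.
move: tI; rewrite !inE => /andP[/andP[t0 t1] t2].
by exists w; split; apply: adjw.
Qed.

Lemma oct3 x0 x1 z z' : 3 <= k ->
  eG x0 x1 -> eG z x0 -> eG z x1 -> eG z' x0 -> eG z' x1 -> z != z' -> ~~ eG z z' ->
  exists w zz, [/\ zz = z \/ zz = z', eG w x0, eG w x1 & eG w zz].
Proof.
move=> k3 e01 ez0 ez1 ez'0 ez'1 nzz nez.
have sym : forall a b, eG a b -> eG b a.
  by move=> a b; rewrite !fadj setIC.
have D := @diamond_sets _ (fun i => f (nth x0 [:: x0; x1; z; z'] i)) k.
case: D => /=.
- by case=> [|[|[|[|?]]]] //= _; apply: cardf1.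
- by apply: adj_card.
- by apply: adj_card; apply: sym.
- by apply: adj_card; apply: sym.
- by apply: adj_card; apply: sym.
- by apply: adj_card; apply: sym.
- by apply: nadj_card.
- move=> [cT c3]; have [w [h0 h1 h2]] := tri_claim k3 e01 ez0 ez1 cT c3.
  by exists w, z; split => //; left.
- move=> [cT c3]; have [w [h0 h1 h2]] := tri_claim k3 e01 ez'0 ez'1 cT c3.
  by exists w, z'; split => //; right.
Qed.

Lemma noK1 : k = 1 -> forall x y, x != y -> eG x y.
Proof.
move=> k1e x y nxy; apply/negPn/negP => ne; have := nadj_card nxy ne; lia.
Qed.
End Neg.

Lemma KTJ_unpack (VG : finType) (eG : rel VG) k : KTJ eG k ->
  exists (VH : finType) (eH : rel VH) (f : VG -> {set VH}),
   [/\ 1 <= k, injective f, (forall x, is_kclique eH k (f x)),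
       (forall A, is_kclique eH k A -> exists x, f x = A) &
       (forall x y, eG x y = (#|f x :&: f y| == k - 1))].
Proof. by move=> [k1 [VH [eH [_ _ [f [? ? ? ?]]]]]]; exists VH, eH, f. Qed.

Lemma KTJ_no1 (VG : finType) (eG : rel VG) x y : x != y -> ~~ eG x y -> ~ KTJ eG 1.
Proof.
move=> nxy ne /KTJ_unpack [VH [eH [f [k1 fi fc fs fa]]]].
by move: ne; rewrite (noK1 k1 fi fc fa (erefl 1) nxy).
Qed.

Lemma KTJ_noP6 (VG : finType) (eG : rel VG) k (x : nat -> VG) :
  (forall i j, i < 6 -> j < 6 -> x i = x j -> i = j) ->
  (forall i j, i < 6 -> j < 6 -> eG (x i) (x j) = (i != j) && p6 i j) -> ~ KTJ eG k.
Proof.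
move=> xi xe /KTJ_unpack [VH [eH [f [k1 fi fc fs fa]]]].
exact: (noP6 k1 fi fc fa xi xe).
Qed.

Lemma KTJ_noK5e (VG : finType) (eG : rel VG) k (x : nat -> VG) :
  (forall i j, i < 5 -> j < 5 -> x i = x j -> i = j) ->
  (forall i j, i < 5 -> j < 5 -> eG (x i) (x j) = k5 i j) -> ~ KTJ eG k.
Proof.
move=> xi xe /KTJ_unpack [VH [eH [f [k1 fi fc fs fa]]]].
exact: (noK5e k1 fi fc fa xi xe).
Qed.

Lemma KTJ_oct3 (VG : finType) (eG : rel VG) k x0 x1 z z' : KTJ eG k -> 3 <= k ->
  eG x0 x1 -> eG z x0 -> eG z x1 -> eG z' x0 -> eG z' x1 -> z != z' -> ~~ eG z z' ->
  exists w zz, [/\ zz = z \/ zz = z', eG w x0, eG w x1 & eG w zz].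
Proof.
move=> /KTJ_unpack [VH [eH [f [k1 fi fc fs fa]]]].
exact: (oct3 k1 fi fc fs fa).
Qed.


Section Table.
Variables (VG : finType) (eG : rel VG) (nG nR : nat) (cd : VG -> nat) (dc : nat -> VG)
  (oR : nat -> 'I_nR) (ER : seq (nat * nat)) (G1 G2 : seq nat) (eGn : nat -> nat -> bool) (k : nat).
Hypotheses (oRK : forall i, i < nR -> val (oR i) = i)
  (dcK : forall x, dc (cd x) = x) (cdK : forall i, i < nG -> cd (dc i) = i)
  (cdlt : forall x, cd x < nG) (eGnE : forall x y, eG x y = eGn (cd x) (cd y)).

Definition eRn (a b : nat) := ((a, b) \in ER) || ((b, a) \in ER).
Definition gn1 i := nth 0 G1 i.
Definition gn2 i := nth 0 G2 i.
Definition cntn i j := ((gn1 i == gn1 j) || (gn1 i == gn2 j)) + ((gn2 i == gn1 j) || (gn2 i == gn2 j)).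

Hypotheses
  (C1 : all (fun a => ~~ ((a, a) \in ER)) (iota 0 nR))
  (C2 : k = 2 \/ all (fun a => all (fun b => all (fun c => ~~ [&& eRn a b, eRn b c & eRn a c]) (iota 0 nR)) (iota 0 nR)) (iota 0 nR))
  (C3 : all (fun x => [&& eRn (gn1 x) (gn2 x), gn1 x < nR & gn2 x < nR]) (iota 0 nG))
  (C4 : all (fun a => all (fun b => eRn a b ==> has (fun x => ((gn1 x == a) && (gn2 x == b)) || ((gn1 x == b) && (gn2 x == a))) (iota 0 nG)) (iota 0 nR)) (iota 0 nR))
  (C5 : all (fun x => all (fun y => (cntn x y == 2) ==> (x == y)) (iota 0 nG)) (iota 0 nG))
  (C6 : all (fun x => all (fun y => eGn x y == (cntn x y == 1)) (iota 0 nG)) (iota 0 nG))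
  (k2 : 2 <= k).

Let eR : rel 'I_nR := fun a b => eRn (val a) (val b).
Let g1 x := oR (gn1 (cd x)).
Let g2 x := oR (gn2 (cd x)).

Lemma inI n (i : 'I_n) : val i \in iota 0 n.
Proof. by rewrite mem_iota /=. Qed.

Lemma C3x x : [&& eRn (gn1 (cd x)) (gn2 (cd x)), gn1 (cd x) < nR & gn2 (cd x) < nR].
Proof. by apply: (allP C3); rewrite mem_iota /= cdlt. Qed.

Lemma vg1 x : val (g1 x) = gn1 (cd x).
Proof. by rewrite /g1 oRK //; case/and3P: (C3x x). Qed.
Lemma vg2 x : val (g2 x) = gn2 (cd x).
Proof. by rewrite /g2 oRK //; case/and3P: (C3x x). Qed.

Lemma cntE' x y : cnt g1 g2 x y = cntn (cd x) (cd y).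
Proof. by rewrite /cnt /cntn -!val_eqE !vg1 !vg2. Qed.

Lemma table_KTJ : KTJ eG k.
Proof.
have symR : symmetric eR by move=> a b; rewrite /eR /eRn orbC.
have irrR : irreflexive eR.
  by move=> a; rewrite /eR /eRn orbb; apply/negbTE; apply: (allP C1); apply: inI.
have tri : k = 2 \/ (forall a b c, eR a b -> eR b c -> eR a c -> False).
  case: C2 => [->|h]; [by left | right] => a b c hab hbc hac.
  have := allP (allP (allP h _ (inI a)) _ (inI b)) _ (inI c).
  by rewrite /eR in hab hbc hac; rewrite hab hbc hac.
have gE : forall x, eR (g1 x) (g2 x).
  by move=> x; rewrite /eR vg1 vg2; case/and3P: (C3x x).
have gS : forall a b, eR a b -> exists x, (g1 x = a /\ g2 x = b) \/ (g1 x = b /\ g2 x = a).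
  move=> a b hab; have := implyP (allP (allP C4 _ (inI a)) _ (inI b)) hab.
  case/hasP => i; rewrite mem_iota /= add0n => hi hc.
  have ci := cdK hi.
  exists (dc i); move: hc => /orP[]/andP[/eqP e1 /eqP e2].
    by left; split; apply: val_inj; rewrite ?vg1 ?vg2 ci.
  by right; split; apply: val_inj; rewrite ?vg1 ?vg2 ci.
have gI : forall x y, cnt g1 g2 x y = 2 -> x = y.
  move=> x y; rewrite cntE' => /eqP h.
  have := implyP (allP (allP C5 _ (inI (Ordinal (cdlt x)))) _ (inI (Ordinal (cdlt y)))) h.
  by move=> /eqP e; rewrite -(dcK x) -(dcK y); congr dc.
have eGE : forall x y, eG x y = (cnt g1 g2 x y == 1).
  move=> x y; rewrite cntE' eGnE.
  exact: (eqP (allP (allP C6 _ (inI (Ordinal (cdlt x)))) _ (inI (Ordinal (cdlt y))))).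
exact: (line_KTJ symR irrR k2 tri gE gS gI eGE).
Qed.
End Table.


Definition o1 (j : nat) : 'I_1 := match j with _ => @Ordinal 1 0 isT end.
Lemma o1K i : i < 1 -> val (o1 i) = i.
Proof. by case: i => [|i] //; rewrite !ltnS ltn0. Qed.
Lemma o1v (x : 'I_1) : o1 (val x) = x.
Proof. by apply: val_inj; rewrite (o1K (ltn_ord x)). Qed.
Definition o2 (j : nat) : 'I_2 := match j with 0 => @Ordinal 2 0 isT | _ => @Ordinal 2 1 isT end.
Lemma o2K i : i < 2 -> val (o2 i) = i.
Proof. by case: i => [|[|i]] //; rewrite !ltnS ltn0. Qed.
Lemma o2v (x : 'I_2) : o2 (val x) = x.
Proof. by apply: val_inj; rewrite (o2K (ltn_ord x)). Qed.
Definition o3 (j : nat) : 'I_3 := match j with 0 => @Ordinal 3 0 isT | 1 => @Ordinal 3 1 isT | _ => @Ordinal 3 2 isT end.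
Lemma o3K i : i < 3 -> val (o3 i) = i.
Proof. by case: i => [|[|[|i]]] //; rewrite !ltnS ltn0. Qed.
Lemma o3v (x : 'I_3) : o3 (val x) = x.
Proof. by apply: val_inj; rewrite (o3K (ltn_ord x)). Qed.
Definition o4 (j : nat) : 'I_4 := match j with 0 => @Ordinal 4 0 isT | 1 => @Ordinal 4 1 isT | 2 => @Ordinal 4 2 isT | _ => @Ordinal 4 3 isT end.
Lemma o4K i : i < 4 -> val (o4 i) = i.
Proof. by case: i => [|[|[|[|i]]]] //; rewrite !ltnS ltn0. Qed.
Lemma o4v (x : 'I_4) : o4 (val x) = x.
Proof. by apply: val_inj; rewrite (o4K (ltn_ord x)). Qed.
Definition o5 (j : nat) : 'I_5 := match j with 0 => @Ordinal 5 0 isT | 1 => @Ordinal 5 1 isT | 2 => @Ordinal 5 2 isT | 3 => @Ordinal 5 3 isT | _ => @Ordinal 5 4 isT end.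
Lemma o5K i : i < 5 -> val (o5 i) = i.
Proof. by case: i => [|[|[|[|[|i]]]]] //; rewrite !ltnS ltn0. Qed.
Lemma o5v (x : 'I_5) : o5 (val x) = x.
Proof. by apply: val_inj; rewrite (o5K (ltn_ord x)). Qed.
Definition o6 (j : nat) : 'I_6 := match j with 0 => @Ordinal 6 0 isT | 1 => @Ordinal 6 1 isT | 2 => @Ordinal 6 2 isT | 3 => @Ordinal 6 3 isT | 4 => @Ordinal 6 4 isT | _ => @Ordinal 6 5 isT end.
Lemma o6K i : i < 6 -> val (o6 i) = i.
Proof. by case: i => [|[|[|[|[|[|i]]]]]] //; rewrite !ltnS ltn0. Qed.
Lemma o6v (x : 'I_6) : o6 (val x) = x.
Proof. by apply: val_inj; rewrite (o6K (ltn_ord x)). Qed.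

Definition pathn (a b : nat) := (a != b) && ~~ ((b == a.+1) || (a == b.+1)).
Lemma path_n n (x y : 'I_n) : compl (@path_adj n) x y = pathn (val x) (val y).
Proof. by []. Qed.
Definition cycn n (a b : nat) := (a != b) && ~~ ((b == a.+1 %% n) || (a == b.+1 %% n)).
Lemma cycle_n n (x y : 'I_n) : compl (@cycle_adj n) x y = cycn n (val x) (val y).
Proof. by []. Qed.

Section OptCode.
Variables (p : nat) (oP : nat -> 'I_p) (oPK : forall i, i < p -> val (oP i) = i)
  (oPv : forall x, oP (val x) = x).
Definition cdO (x : option ('I_p * bool)) : nat :=
  if x is Some (i, b) then (b + (val i).*2).+1 else 0.
Definition dcO (c : nat) : option ('I_p * bool) :=
  if c is c'.+1 then Some (oP c'./2, odd c') else None.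
Lemma dcOK x : dcO (cdO x) = x.
Proof.
case: x => [[i b]|] //=; rewrite half_bit_double oPv; congr (Some (_, _)).
by rewrite oddD odd_double addbF; case: b.
Qed.
Lemma cdOK i : i < (p.*2).+1 -> cdO (dcO i) = i.
Proof.
case: i => [|i] //= hi; rewrite oPK; first by rewrite odd_double_half.
have := odd_double_half i; lia.
Qed.
Lemma cdOlt x : cdO x < (p.*2).+1.
Proof. case: x => [[i b]|] //=; have := ltn_ord i; case: b => /=; lia. Qed.
End OptCode.

Lemma eG_code (V : finType) (eG : rel V) (cd : V -> nat) (dc : nat -> V) :
  (forall x, dc (cd x) = x) -> forall x y, eG x y = eG (dc (cd x)) (dc (cd y)).
Proof. by move=> h x y; rewrite !h. Qed.

Lemma P3_KTJ k : 2 <= k -> KTJ (compl (@path_adj 3)) k.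
Proof.
move=> k2.
by apply: (@table_KTJ _ _ 3 5 (fun x => val x) o3 o5 [:: (0,1);(1,2);(3,4)]
   [:: 0;3;1] [:: 1;4;2] pathn k o5K o3v o3K (fun x => ltn_ord x) (@path_n 3)) => //; right.
Qed.

Lemma P4_KTJ k : 2 <= k -> KTJ (compl (@path_adj 4)) k.
Proof.
move=> k2.
by apply: (@table_KTJ _ _ 4 5 (fun x => val x) o4 o5 [:: (0,1);(1,2);(2,3);(3,4)]
   [:: 1;3;0;2] [:: 2;4;1;3] pathn k o5K o4v o4K (fun x => ltn_ord x) (@path_n 4)) => //; right.
Qed.

Lemma P5_KTJ k : 2 <= k -> KTJ (compl (@path_adj 5)) k.
Proof.
move=> k2.
by apply: (@table_KTJ _ _ 5 5 (fun x => val x) o5 o5 [:: (0,1);(1,2);(2,3);(3,0);(0,4)]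
   [:: 0;2;0;1;0] [:: 1;3;4;2;3] pathn k o5K o5v o5K (fun x => ltn_ord x) (@path_n 5)) => //; right.
Qed.

Lemma C4_KTJ k : 2 <= k -> KTJ (compl (@cycle_adj 4)) k.
Proof.
move=> k2.
by apply: (@table_KTJ _ _ 4 6 (fun x => val x) o4 o6 [:: (0,1);(1,2);(3,4);(4,5)]
   [:: 0;3;1;4] [:: 1;4;2;5] (cycn 4) k o6K o4v o4K (fun x => ltn_ord x) (@cycle_n 4)) => //; right.
Qed.

Lemma C5_KTJ k : 2 <= k -> KTJ (compl (@cycle_adj 5)) k.
Proof.
move=> k2.
by apply: (@table_KTJ _ _ 5 5 (fun x => val x) o5 o5 [:: (0,1);(1,2);(2,3);(3,4);(4,0)]
   [:: 0;2;0;1;3] [:: 1;3;4;2;4] (cycn 5) k o5K o5v o5K (fun x => ltn_ord x) (@cycle_n 5)) => //; right.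
Qed.

Lemma C6_KTJ k : 2 <= k -> KTJ (compl (@cycle_adj 6)) k.
Proof.
move=> k2.
by apply: (@table_KTJ _ _ 6 5 (fun x => val x) o6 o5 [:: (0,2);(0,3);(0,4);(1,2);(1,3);(1,4)]
   [:: 0;1;0;1;0;1] [:: 2;3;4;2;3;4] (cycn 6) k o5K o6v o6K (fun x => ltn_ord x) (@cycle_n 6)) => //; right.
Qed.

Definition fn p (oP : nat -> 'I_p) (a b : nat) := compl (@friend_adj p) (dcO oP a) (dcO oP b).

Lemma F1_KTJ k : 2 <= k -> KTJ (compl (@friend_adj 1)) k.
Proof.
move=> k2.
by apply: (@table_KTJ _ _ 3 6 (@cdO 1) (dcO o1) o6 [:: (0,1);(2,3);(4,5)]
   [:: 0;2;4] [:: 1;3;5] (fn o1) k o6K (dcOK o1v) (cdOK o1K) (@cdOlt 1) (eG_code _ (dcOK o1v))) => //; right.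
Qed.

Lemma F2_KTJ k : 2 <= k -> KTJ (compl (@friend_adj 2)) k.
Proof.
move=> k2.
by apply: (@table_KTJ _ _ 5 6 (@cdO 2) (dcO o2) o6 [:: (0,1);(2,3);(3,4);(4,5);(5,2)]
   [:: 0;2;4;3;5] [:: 1;3;5;4;2] (fn o2) k o6K (dcOK o2v) (cdOK o2K) (@cdOlt 2) (eG_code _ (dcOK o2v))) => //; right.
Qed.

Lemma F3_KTJ2 : KTJ (compl (@friend_adj 3)) 2.
Proof.
by apply: (@table_KTJ _ _ 7 6 (@cdO 3) (dcO o3) o6 [:: (0,1);(2,3);(2,4);(2,5);(3,4);(3,5);(4,5)]
   [:: 0;2;4;2;3;2;3] [:: 1;3;5;4;5;5;4] (fn o3) 2 o6K (dcOK o3v) (cdOK o3K) (@cdOlt 3) (eG_code _ (dcOK o3v))) => //; left.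
Qed.


Lemma eq_inl (A B : eqType) (a b : A) : (@inl A B a == inl b) = (a == b).
Proof. by []. Qed.
Lemma eq_inr (A B : eqType) (a b : B) : (@inr A B a == inr b) = (a == b).
Proof. by []. Qed.
Lemma eq_inlr (A B : eqType) (a : A) (b : B) : (inl a == inr b) = false.
Proof. by []. Qed.
Lemma eq_inrl (A B : eqType) (a : A) (b : B) : (inr b == inl a) = false.
Proof. by []. Qed.

Definition clR (VG C : finType) (c : VG -> C) : rel (C + VG) := fun u v =>
  match u, v with
  | inl j, inr x => c x == j
  | inr x, inl j => c x == j
  | _, _ => false end.

Lemma cluster_KTJ (VG C : finType) (eG : rel VG) (c : VG -> C) k : 2 <= k ->
  (forall x y, eG x y = (x != y) && (c x == c y)) -> KTJ eG k.
Proof.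
move=> k2 eGE.
have symR : symmetric (clR c) by case=> [i|x] [j|y].
have irrR : irreflexive (clR c) by case.
have tri : k = 2 \/ (forall a b d, clR c a b -> clR c b d -> clR c a d -> False).
  by right; case=> [?|?] [?|?] [?|?].
have gE : forall x, clR c (inl (c x)) (inr x) by move=> x /=.
have gS : forall a b, clR c a b -> exists x, (inl (c x) = a /\ inr x = b) \/ (inl (c x) = b /\ inr x = a).
  case=> [j|x] [i|y] //= /eqP e.
    by exists y; left; rewrite e.
  by exists x; right; rewrite e.
have gI : forall x y, cnt (fun x => inl (c x)) (fun x => inr x) x y = 2 -> x = y.
  move=> x y; rewrite /cnt !eq_inl !eq_inr !eq_inlr !eq_inrl /= orbF.
  by case: eqP => // _; case: eqP.
have eGE' : forall x y, eG x y = (cnt (fun x => inl (c x)) (fun x => inr x) x y == 1).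
  move=> x y; rewrite eGE /cnt !eq_inl !eq_inr !eq_inlr !eq_inrl /= orbF.
  case: (x =P y) => [->|nxy]; first by rewrite eqxx.
  by case: (c x == c y).
exact: (line_KTJ symR irrR k2 tri gE gS gI eGE').
Qed.

Lemma part1 n : 2 <= n -> forall k, KTJ (compl (@Kn_adj n)) k <-> 2 <= k.
Proof.
move=> hn k; split.
- have h0 : 0 < n by lia. have h1 : 1 < n by lia.
  move=> H; have [k1 _] := H; have [k1e|//] : k = 1 \/ 2 <= k by lia.
  by rewrite k1e in H; exfalso; apply: (@KTJ_no1 _ _ (Ordinal h0) (Ordinal h1) _ _ H).
- move=> k2; apply: (@cluster_KTJ _ _ _ id) => // x y.
  by rewrite /compl /Kn_adj; case: eqP.
Qed.

Definition sidec (m n : nat) (x : 'I_m + 'I_n) : bool := if x is inl _ then true else false.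

Lemma Kmn_cl m n k : 2 <= k -> KTJ (compl (@Kmn_adj m n)) k.
Proof.
move=> k2; apply: (@cluster_KTJ _ _ _ (@sidec m n)) => // x y.
by rewrite /compl /Kmn_adj; case: x => ?; case: y => ? /=; rewrite ?andbT ?andbF.
Qed.

Lemma part2 n : 1 <= n -> forall k, KTJ (compl (@Kmn_adj 1 n)) k <-> 2 <= k.
Proof.
move=> hn k; split; last by apply: Kmn_cl.
move=> H; have [k1 _] := H; have [k1e|//] : k = 1 \/ 2 <= k by lia.
by rewrite k1e in H; exfalso; apply: (@KTJ_no1 _ _ (inl ord0) (inr (Ordinal hn)) _ _ H).
Qed.

Lemma part3 m n : 2 <= m -> m <= n -> forall k, KTJ (compl (@Kmn_adj m n)) k <-> 2 <= k.
Proof.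
move=> hm hn k; split; last by apply: Kmn_cl.
have h0 : 0 < m by lia. have h1 : 0 < n by lia.
move=> H; have [k1 _] := H; have [k1e|//] : k = 1 \/ 2 <= k by lia.
by rewrite k1e in H; exfalso; apply: (@KTJ_no1 _ _ (inl (Ordinal h0)) (inr (Ordinal h1)) _ _ H).
Qed.

Definition bookc p (x : bool + 'I_p) : option bool := if x is inl a then Some a else None.

Lemma part4 p : 1 <= p -> forall k, KTJ (compl (@book_adj p)) k <-> 2 <= k.
Proof.
move=> hp k; split.
- move=> H; have [k1 _] := H; have [k1e|//] : k = 1 \/ 2 <= k by lia.
  by rewrite k1e in H; exfalso; apply: (@KTJ_no1 _ _ (inl false) (inl true) _ _ H).
- move=> k2; apply: (@cluster_KTJ _ _ _ (@bookc p)) => // x y.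
  rewrite /compl /book_adj; case: x => [a|i]; case: y => [b|j] //=; rewrite ?andbT ?andbF //.
  by case: a; case: b.
Qed.


Lemma all2P n (P : nat -> nat -> bool) : all (fun i => all (fun j => P i j) (iota 0 n)) (iota 0 n) ->
  forall i j, i < n -> j < n -> P i j.
Proof.
move=> h i j hi hj; apply: (allP (allP h i _) j); by rewrite mem_iota.
Qed.

Lemma all1P n (P : nat -> bool) : all P (iota 0 n) -> forall i, i < n -> P i.
Proof. by move=> h i hi; apply: (allP h); rewrite mem_iota. Qed.

Lemma k1_or k : 1 <= k -> k = 1 \/ 2 <= k.
Proof. lia. Qed.

Lemma vinord n i : i <= n -> val (@inord n i) = i.
Proof. exact: inordK. Qed.

Lemma path_no n k : 6 <= n -> ~ KTJ (compl (@path_adj n)) k.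
Proof.
case: n => [|n] // h6.
have PP := @all2P 6 (fun i j => pathn i j == (i != j) && p6 i j) isT.
apply: (@KTJ_noP6 _ _ k (fun i => @inord n i)).
- move=> i j hi hj /(congr1 val); rewrite !vinord //; lia.
- move=> i j hi hj; rewrite path_n !vinord; try lia.
  exact: (eqP (PP _ _ hi hj)).
Qed.

Lemma cycle_no n k : 7 <= n -> ~ KTJ (compl (@cycle_adj n)) k.
Proof.
case: n => [|n] // h7.
have PP := @all2P 6 (fun i j => pathn i j == (i != j) && p6 i j) isT.
apply: (@KTJ_noP6 _ _ k (fun i => @inord n i)).
- move=> i j hi hj /(congr1 val); rewrite !vinord //; lia.
- move=> i j hi hj; rewrite cycle_n !vinord; try lia.
  rewrite -(eqP (PP _ _ hi hj)) /cycn /pathn !modn_small //; lia.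
Qed.

Lemma friend_some p (u v : 'I_p) a b : compl (@friend_adj p) (Some (u, a)) (Some (v, b)) =
  ~~ ((u == v) && (a == b)) && ~~ ((u == v) && (a != b)).
Proof. by []. Qed.

Definition f5 := [:: 0; 1; 2; 3; 2].

Lemma friend_no p k : 4 <= p -> ~ KTJ (compl (@friend_adj p)) k.
Proof.
case: p => [|p] // h4.
have hn : forall i, nth 0 f5 i <= p.
  move=> i; apply: (@leq_trans 3); last lia.
  by rewrite /f5; case: i => [|[|[|[|[|i]]]]] //=; rewrite nth_nil.
have ieq : forall i j, (@inord p (nth 0 f5 i) == inord (nth 0 f5 j)) = (nth 0 f5 i == nth 0 f5 j).
  by move=> i j; rewrite -val_eqE /= !vinord.
have PP := @all2P 5 (fun i j => ~~ ((nth 0 f5 i == nth 0 f5 j) && ((i == 4) == (j == 4))) &&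
   ~~ ((nth 0 f5 i == nth 0 f5 j) && ((i == 4) != (j == 4))) == k5 i j) isT.
have QQ := @all2P 5 (fun i j => (nth 0 f5 i == nth 0 f5 j) && ((i == 4) == (j == 4)) ==> (i == j)) isT.
apply: (@KTJ_noK5e _ _ k (fun i => Some (@inord p (nth 0 f5 i), i == 4))).
- move=> i j hi hj [/(congr1 val)]; rewrite !vinord // => e1 e2.
  by apply/eqP; apply: (implyP (QQ _ _ hi hj)); rewrite e1 e2 !eqxx.
- move=> i j hi hj; rewrite friend_some ieq.
  exact: (eqP (PP _ _ hi hj)).
Qed.

Lemma F3_no3 k : 3 <= k -> ~ KTJ (compl (@friend_adj 3)) k.
Proof.
move=> k3 H.
have [w [zz [hz h0 h1 h2]]] := @KTJ_oct3 _ _ k (Some (o3 0, false)) (Some (o3 1, false))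
   (Some (o3 2, false)) (Some (o3 2, true)) H k3 isT isT isT isT isT isT isT.
rewrite -(dcOK o3v w) in h0 h1 h2.
move: (cdOlt w) h0 h1 h2; move: (cdO w) => c hc.
have A := @all1P 7 (fun c => ~~ [&& compl (@friend_adj 3) (dcO o3 c) (Some (o3 0, false)),
   compl (@friend_adj 3) (dcO o3 c) (Some (o3 1, false)) &
   compl (@friend_adj 3) (dcO o3 c) (Some (o3 2, false))]) isT c hc.
have B := @all1P 7 (fun c => ~~ [&& compl (@friend_adj 3) (dcO o3 c) (Some (o3 0, false)),
   compl (@friend_adj 3) (dcO o3 c) (Some (o3 1, false)) &
   compl (@friend_adj 3) (dcO o3 c) (Some (o3 2, true))]) isT c hc.
by case: hz => -> h0 h1 h2; [move: A | move: B]; rewrite h0 h1 h2.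
Qed.

Ltac no1_tac x y := let H := fresh in move=> H; exfalso; apply: (@KTJ_no1 _ _ x y _ _ H).

Theorem theorem4p10 :
  (* (1) *)
  (forall n, 2 <= n -> forall k, KTJ (compl (@Kn_adj n)) k <-> 2 <= k) /\
  (* (2) *)
  (forall n, 1 <= n -> forall k, KTJ (compl (@Kmn_adj 1 n)) k <-> 2 <= k) /\
  (* (3) *)
  (forall m n, 2 <= m -> m <= n -> forall k, KTJ (compl (@Kmn_adj m n)) k <-> 2 <= k) /\
  (* (4) *)
  (forall p, 1 <= p -> forall k, KTJ (compl (@book_adj p)) k <-> 2 <= k) /\
  (* (5) *)
  (forall n, 3 <= n <= 5 -> forall k, KTJ (compl (@path_adj n)) k <-> 2 <= k) /\
  (forall n, 6 <= n -> forall k, ~ KTJ (compl (@path_adj n)) k) /\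
  (* (6) *)
  (forall n, 4 <= n <= 6 -> forall k, KTJ (compl (@cycle_adj n)) k <-> 2 <= k) /\
  (forall n, 7 <= n -> forall k, ~ KTJ (compl (@cycle_adj n)) k) /\
  (* (7) *)
  (forall p, 1 <= p <= 2 -> forall k, KTJ (compl (@friend_adj p)) k <-> 2 <= k) /\
  (forall k, KTJ (compl (@friend_adj 3)) k <-> k = 2) /\
  (forall p, 4 <= p -> forall k, ~ KTJ (compl (@friend_adj p)) k).
Proof.
split; first exact: part1.
split; first exact: part2.
split; first exact: part3.
split; first exact: part4.
split.
  move=> n /andP[h1 h2] k; split; last first.
    have [->|[->|->]] : n = 3 \/ n = 4 \/ n = 5 by lia.
    - exact: P3_KTJ. - exact: P4_KTJ. - exact: P5_KTJ.
  move=> H; have [k1 _] := H; have [e|//] := k1_or k1; rewrite e in H; exfalso; move: H.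
  have [->|[->|->]] : n = 3 \/ n = 4 \/ n = 5 by lia.
  - by no1_tac (@Ordinal 3 0 isT) (@Ordinal 3 1 isT).
  - by no1_tac (@Ordinal 4 0 isT) (@Ordinal 4 1 isT).
  - by no1_tac (@Ordinal 5 0 isT) (@Ordinal 5 1 isT).
split; first by move=> n h k; apply: path_no.
split.
  move=> n /andP[h1 h2] k; split; last first.
    have [->|[->|->]] : n = 4 \/ n = 5 \/ n = 6 by lia.
    - exact: C4_KTJ. - exact: C5_KTJ. - exact: C6_KTJ.
  move=> H; have [k1 _] := H; have [e|//] := k1_or k1; rewrite e in H; exfalso; move: H.
  have [->|[->|->]] : n = 4 \/ n = 5 \/ n = 6 by lia.
  - by no1_tac (@Ordinal 4 0 isT) (@Ordinal 4 1 isT).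
  - by no1_tac (@Ordinal 5 0 isT) (@Ordinal 5 1 isT).
  - by no1_tac (@Ordinal 6 0 isT) (@Ordinal 6 1 isT).
split; first by move=> n h k; apply: cycle_no.
split.
  move=> p /andP[h1 h2] k; split; last first.
    have [->|->] : p = 1 \/ p = 2 by lia.
    - exact: F1_KTJ. - exact: F2_KTJ.
  move=> H; have [k1 _] := H; have [e|//] := k1_or k1; rewrite e in H; exfalso; move: H.
  have [->|->] : p = 1 \/ p = 2 by lia.
  - by no1_tac (@None ('I_1 * bool)) (Some (@Ordinal 1 0 isT, false)).
  - by no1_tac (@None ('I_2 * bool)) (Some (@Ordinal 2 0 isT, false)).
split.
  move=> k; split; last by move=> ->; exact: F3_KTJ2.
  move=> H; have [k1 _] := H; have [e|h2] := k1_or k1.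
    rewrite e in H; exfalso; move: H.
    by no1_tac (@None ('I_3 * bool)) (Some (@Ordinal 3 0 isT, false)).
  have [//|k3] : k = 2 \/ 3 <= k by lia.
  by case: (F3_no3 k3 H).
by move=> p h k; apply: friend_no.
Qed.
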